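(* Let $p,q$ be positive integers, with notation as in the context. Let $T_c$ be a positive integer with $T_c=2^{l_c}T_1$ for a non-negative integer $l_c$ (or $T_c=1$), and let $s$ be the integer with $T_{e_s}=2^sT_1$. Suppose the positive integer $e$ satisfies $$e\ge\begin{cases}\max(e_p,e_q) & \text{if } T_c=1;\\ e_{s,g}+1 & \text{if } l_c=0,\ T_1\ne 1;\\ e_{s,g}+2l_c-1 & \text{if } 1\le l_c\le s+1;\\ e_{s,g}+s+1+l_c & \text{if } l_c\ge s+2.\end{cases}$$ Then $N_{T_c,e}=N_{T_c,e+l}$ for every positive integer $l$.
   Context: Let $\mathbf{C}=\begin{bmatrix}1 & p\\ q & 1+pq\end{bmatrix}$. The Cat map over $\mathbb{Z}_{2^e}$ is the bijection $v\mapsto \mathbf{C}v\bmod 2^e$ of $\mathbb{Z}_{2^e}^2$; a cycle of length $n$ is an orbit of a point $v$ for which $n$ is the least positive integer with $\mathbf{C}^n v\equiv v\pmod{2^e}$. $N_{T_c,e}$ denotes the number of cycles of length $T_c$ of the Cat map over $\mathbb{Z}_{2^e}$, and $T_e$ its least period (least $n\ge1$ with $\mathbf{C}^n\equiv I\pmod{2^e}$). Put $A=pq+2$, $B=\sqrt{A^2-4}$, $G_n=\left(\frac{A+B}{2}\right)^n+\left(\frac{A-B}{2}\right)^n$, $H_n=\frac{1}{B}\left(\left(\frac{A+B}{2}\right)^n-\left(\frac{A-B}{2}\right)^n\right)$ (integers). For a nonzero integer $m$ let $v_2(m)$ be the largest $x$ with $2^x\mid m$. Let $e_p=v_2(p)$,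 $e_q=v_2(q)$; $T_1=3$ if $p,q$ are both odd, $T_1=2$ if exactly one of $p,q$ is odd, $T_1=1$ if both are even; $\hat h=-1$ if $e_p+e_q=0$ and $\hat h=\min(e_p,e_q)$ otherwise; $e_{s,h}=v_2(H_{T_1})$; $m_0=1$ if $\frac12 G_{T_1}\not\equiv 1\pmod 4$ and $m_0=0$ otherwise; $e_{s,g}=v_2\left(\frac12 G_{2^{m_0}T_1}-1\right)$; $x_0=e_{s,h}+m_0+\hat h-e_{s,g}$ if $e_{s,g}<e_{s,h}+m_0+\hat h$ and $x_0=0$ otherwise; and $e_s=e_{s,h}+m_0+\hat h+x_0$. The cases in the displayed condition are read in order (the first applicable one is used). *)

(* Defs.v *)
From HB Require Import structures.
From mathcomp Require Import all_boot all_order all_algebra.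
Unset Printing Implicit Defensive.
Import Order.TTheory GRing.Theory Num.Theory.
Local Open Scope ring_scope.

Definition Cmat (p q : nat) : 'M[int]_2 :=
  \matrix_(i < 2, j < 2)
    if val i == 0%N then (if val j == 0%N then 1 else p%:Z)
    else (if val j == 0%N then q%:Z else 1 + (p * q)%N%:Z).

(* C reduced modulo 2^e, as a matrix over Z_{2^e} (used for e >= 1). *)
Definition Cmod (p q e : nat) : 'M['Z_(2 ^ e)]_2 :=
  map_mx (fun z : int => z%:~R) (Cmat p q).

Definition pt_period (p q e : nat) (v : 'cV['Z_(2 ^ e)]_2) (n : nat) : bool :=
  [&& (0 < n)%N, (Cmod p q e ^+ n) *m v == v &
      [forall m : 'I_n, (0 < m)%N ==> ((Cmod p q e ^+ m) *m v != v)]].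

Definition cat_orbit (p q e : nat) (v : 'cV['Z_(2 ^ e)]_2) : {set 'cV['Z_(2 ^ e)]_2} :=
  [set x | fconnect (fun w => Cmod p q e *m w) v x].

Definition Ncycles (p q n e : nat) : nat :=
  #|[set cat_orbit p q e v | v in [pred v : 'cV['Z_(2 ^ e)]_2 | pt_period p q e v n]]|.

Definition mx_eqmod (e : nat) (M N : 'M[int]_2) : bool :=
  [forall i, forall j, (M i j == N i j %[mod (2 ^ e)%N%:Z])%Z].

Definition mx_least_period (p q e n : nat) : bool :=
  [&& (0 < n)%N, mx_eqmod e (Cmat p q ^+ n) 1 &
      [forall m : 'I_n, (0 < m)%N ==> ~~ mx_eqmod e (Cmat p q ^+ m) 1]].

Definition Aval (p q : nat) : int := (p * q)%N%:Z + 2.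

(* G_n = alpha^n + beta^n, H_n = (alpha^n - beta^n)/B, where alpha, beta are the
   roots of X^2 - A X + 1; both satisfy X_{n+2} = A X_{n+1} - X_n. *)
Fixpoint Gseq (A : int) (n : nat) : int :=
  match n with
  | 0%N => 2
  | 1%N => A
  | S ((S m) as k) => A * Gseq A k - Gseq A m
  end.

Fixpoint Hseq (A : int) (n : nat) : int :=
  match n with
  | 0%N => 0
  | 1%N => 1
  | S ((S m) as k) => A * Hseq A k - Hseq A m
  end.

Definition Gn (p q n : nat) : int := Gseq (Aval p q) n.
Definition Hn (p q n : nat) : int := Hseq (Aval p q) n.

Definition v2 (m : int) : nat := logn 2 `|m|%N.

Definition T1 (p q : nat) : nat :=
  if odd p && odd q then 3%N else if odd p || odd q then 2%N else 1%N.

Definition ep (p : nat) : nat := logn 2 p.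

Definition hath (p q : nat) : int :=
  if (ep p + ep q == 0)%N then -1 else (minn (ep p) (ep q))%:Z.

Definition esh (p q : nat) : nat := v2 (Hn p q (T1 p q)).

Definition m0 (p q : nat) : nat :=
  if (((Gn p q (T1 p q)) %/ 2)%Z %% 4)%Z != 1 then 1%N else 0%N.

Definition esg (p q : nat) : nat :=
  v2 (((Gn p q (2 ^ m0 p q * T1 p q)) %/ 2)%Z - 1).

Definition Xsum (p q : nat) : int := (esh p q)%:Z + (m0 p q)%:Z + hath p q.

Definition x0 (p q : nat) : int :=
  if (esg p q)%:Z < Xsum p q then Xsum p q - (esg p q)%:Z else 0.

Definition es (p q : nat) : int := Xsum p q + x0 p q.

(* Main.v *)
Require Import Defs.
From HB Require Import structures.
From mathcomp Require Import all_boot all_order all_algebra.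
From mathcomp Require Import ring lra zify.
Import Order.TTheory GRing.Theory Num.Theory.

Section Helpers.
Local Open Scope ring_scope.

Lemma natrZp0 (m : nat) (hm : (1 < m)%N) (n : nat) :
  ((n%:R : 'Z_m) == 0) = (m %| n)%N.
Proof.
apply/eqP/idP => [h|h].
- have := val_Zp_nat hm n; rewrite h /= => h0.
  by rewrite /dvdn -h0.
- apply: val_inj; rewrite /= val_Zp_nat //.
  by move: h; rewrite /dvdn => /eqP.
Qed.

Lemma intrZp0 (m : nat) (hm : (1 < m)%N) (z : int) :
  ((z%:~R : 'Z_m) == 0) = ((m%:Z) %| z)%Z.
Proof.
case: z => n.
- by rewrite -pmulrn natrZp0 // dvdzE.
- by rewrite NegzE mulrNz oppr_eq0 -pmulrn natrZp0 // dvdzE.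
Qed.

Lemma intrZp_eq (m : nat) (hm : (1 < m)%N) (z1 z2 : int) :
  ((z1%:~R : 'Z_m) == z2%:~R) = ((m%:Z) %| z1 - z2)%Z.
Proof. by rewrite -subr_eq0 -intrB intrZp0. Qed.

Definition liftz (e : nat) (x : 'Z_(2 ^ e)) : int := (x : nat)%:Z.

Arguments liftz {e}.

Lemma liftzK (e : nat) (x : 'Z_(2 ^ e)) : ((liftz x)%:~R : 'Z_(2 ^ e)) = x.
Proof. by rewrite /liftz -pmulrn natr_Zp. Qed.

Lemma gt1_2exp e : (0 < e)%N -> (1 < 2 ^ e)%N.
Proof. by case: e => // e _; rewrite expnS; have := expn_gt0 2 e; lia. Qed.

Lemma up_eq (e l : nat) (he : (0 < e)%N) (z : int) (x : 'Z_(2 ^ e)) :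
  z%:~R = x ->
  (((2 ^ l)%N%:Z * z)%:~R : 'Z_(2 ^ (e + l))) = ((2 ^ l)%N%:Z * liftz x)%:~R.
Proof.
move=> hz; apply/eqP; rewrite intrZp_eq; last by apply: gt1_2exp; lia.
rewrite -mulrBr expnD PoszM [X in (_ %| X)%Z]mulrC dvdz_mul2r; last by rewrite eqz_nat expn_eq0.
by rewrite -intrZp_eq ?gt1_2exp // liftzK hz.
Qed.

Lemma up_inj (e l : nat) (he : (0 < e)%N) (x y : 'Z_(2 ^ e)) :
  (((2 ^ l)%N%:Z * liftz x)%:~R : 'Z_(2 ^ (e + l))) = ((2 ^ l)%N%:Z * liftz y)%:~R ->
  x = y.
Proof.
move/eqP; rewrite intrZp_eq; last by apply: gt1_2exp; lia.
rewrite -mulrBr expnD PoszM [X in (_ %| X)%Z]mulrC dvdz_mul2r; last by rewrite eqz_nat expn_eq0.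
by rewrite -intrZp_eq ?gt1_2exp // !liftzK => /eqP.
Qed.

Definition phi (e l : nat) (v : 'cV['Z_(2 ^ e)]_2) : 'cV['Z_(2 ^ (e + l))]_2 :=
  \col_i (((2 ^ l)%N%:Z * liftz (v i 0))%:~R).

Arguments phi {e} l.

Lemma ord2_cases (i : 'I_2) : i = 0 \/ i = 1.
Proof.
case: i => [[|[|k]]] Hi; [left|right|by []]; exact: val_inj.
Qed.

Lemma col2P (R : Type) (w1 w2 : 'cV[R]_2) :
  w1 0 0 = w2 0 0 -> w1 1 0 = w2 1 0 -> w1 = w2.
Proof.
move=> h0 h1; apply/matrixP => i j.
rewrite (ord1 j); by case: (ord2_cases i) => ->.
Qed.

Lemma phi_inj (e l : nat) (he : (0 < e)%N) : injective (@phi e l).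
Proof.
move=> v w h; apply/col2P.
- by apply: (@up_inj e l); move/matrixP: h => /(_ 0 0); rewrite !mxE.
- by apply: (@up_inj e l); move/matrixP: h => /(_ 1 0); rewrite !mxE.
Qed.

Lemma mulmx2E {R : pzRingType} (M : 'M[R]_2) (w : 'cV[R]_2) i :
  (M *m w) i 0 = M i 0 * w 0 0 + M i 1 * w 1 0.
Proof.
rewrite mxE big_ord_recl big_ord1.
by rewrite (_ : lift ord0 ord0 = 1 :> 'I_2) //; apply: val_inj.
Qed.

Lemma phi_equiv (p q e l : nat) (he : (0 < e)%N) (v : 'cV['Z_(2 ^ e)]_2) :
  Cmod p q (e + l) *m phi l v = phi l (Cmod p q e *m v).
Proof.
set w := Cmod p q e *m v.
apply/matrixP => i j; rewrite (ord1 j) mulmx2E.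
have -> : phi l w i 0 = (((2 ^ l)%N%:Z * liftz (w i 0))%:~R) by rewrite mxE.
rewrite !mxE -!intrM -intrD.
have -> : forall a b x y c : int, a * (c * x) + b * (c * y) = c * (a * x + b * y)
  by move=> *; ring.
apply: up_eq => //.
have := mulmx2E (Cmod p q e) v i; rewrite mxE => ->.
by rewrite intrD !intrM !liftzK !mxE.
Qed.

Lemma phi_pow (p q e l : nat) (he : (0 < e)%N) (v : 'cV['Z_(2 ^ e)]_2) n :
  Cmod p q (e + l) ^+ n *m phi l v = phi l (Cmod p q e ^+ n *m v).
Proof.
elim: n => [|n IH]; first by rewrite !expr0 !mul1mx.
rewrite !exprS -[Cmod p q (e + l) * _]/(mulmx _ _) -[Cmod p q e * _]/(mulmx _ _) -!mulmxA IH phi_equiv //.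
Qed.

Lemma pt_phi (p q e l : nat) (he : (0 < e)%N) (v : 'cV['Z_(2 ^ e)]_2) n :
  pt_period p q (e + l) (phi l v) n = pt_period p q e v n.
Proof.
rewrite /pt_period phi_pow // (inj_eq (@phi_inj e l he)).
congr [&& _, _ & _]; apply: eq_forallb => m.
by rewrite phi_pow // (inj_eq (@phi_inj e l he)).
Qed.

Lemma iter_phi (p q e l : nat) (he : (0 < e)%N) (v : 'cV['Z_(2 ^ e)]_2) n :
  iter n (fun w => Cmod p q (e + l) *m w) (phi l v) =
  phi l (iter n (fun w => Cmod p q e *m w) v).
Proof. by elim: n => [|n IH] //=; rewrite IH phi_equiv. Qed.

Lemma orbit_phi (p q e l : nat) (he : (0 < e)%N) (v : 'cV['Z_(2 ^ e)]_2) :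
  cat_orbit p q (e + l) (phi l v) = phi l @: cat_orbit p q e v.
Proof.
apply/setP => x; rewrite inE; apply/idP/imsetP.
- move/iter_findex => <-; rewrite iter_phi //.
  by eexists; last reflexivity; rewrite inE fconnect_iter.
- case=> y; rewrite inE => /iter_findex <- ->.
  by rewrite -iter_phi // fconnect_iter.
Qed.

Lemma Ncycles_stable (p q Tc e l : nat) (he : (0 < e)%N)
  (surj : forall u : 'cV['Z_(2 ^ (e + l))]_2, pt_period p q (e + l) u Tc ->
           exists v, u = phi l v) :
  Ncycles p q Tc e = Ncycles p q Tc (e + l).
Proof.
rewrite /Ncycles.
set Se := [set cat_orbit p q e v | v in _].
have -> : [set cat_orbit p q (e + l) u | u in [pred u | pt_period p q (e + l) u Tc]]
   = (fun S : {set 'cV['Z_(2 ^ e)]_2} => phi l @: S) @: Se.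
  apply/setP => X; apply/imsetP/imsetP.
  - case=> u; rewrite inE => Pu ->.
    have [v hv] := surj u Pu; subst u.
    move: Pu; rewrite pt_phi // => Pv.
    exists (cat_orbit p q e v); first by apply: imset_f; rewrite inE.
    exact: orbit_phi.
  - case=> Y /imsetP [v Pv ->] ->.
    exists (phi l v); first by rewrite inE pt_phi //; rewrite inE in Pv.
    by rewrite orbit_phi.
by rewrite (card_imset Se (imset_inj (@phi_inj e l he))).
Qed.


Lemma Cmod_pow p q e n : Cmod p q e ^+ n = map_mx (fun z : int => z%:~R) (Cmat p q ^+ n).
Proof.
elim: n => [|n IH]; first by rewrite !expr0; apply/matrixP => i j; rewrite !mxE; case: (i == j)...
by rewrite !exprS IH /Cmod -[_ * _]/(mulmx _ _) map_mxM.
Qed.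


Lemma odd_dvd (c : nat) (o t x : int) : o = 2 * t + 1 ->
  (((2 ^ c)%N%:Z) %| o * x)%Z -> (((2 ^ c)%N%:Z) %| x)%Z.
Proof.
move=> ho; subst o; elim: c x => [|c IH] x; first by rewrite expn0 dvd1z.
rewrite expnS PoszM => /dvdzP [w hw].
have h2 : (2 %| x)%Z.
  apply/dvdzP; exists (w * (2 ^ c)%N%:Z - t * x).
  transitivity ((2 * t + 1) * x - 2 * t * x); first ring.
  by rewrite hw; ring.
case/dvdzP: h2 => x' hx'; subst x.
have : ((2 ^ c)%N%:Z %| (2 * t + 1) * x')%Z.
  apply/dvdzP; exists w.
  apply: (mulIf (_ : (2:int) != 0)) => //.
  transitivity ((2 * t + 1) * (x' * 2)); first ring.
  by rewrite hw; ring.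
move/IH => /dvdzP [y ->]; apply/dvdzP; exists y.
ring.
Qed.

Record Q := mkQ { q11 : int; q12 : int; q21 : int; q22 : int }.

Definition WQj (X : Q) (a j : nat) : Prop :=
  exists al be ga ep : int, exists o t : int,
  [/\ q11 X - 1 = (2 ^ a)%N%:Z * al, q12 X = (2 ^ a)%N%:Z * be,
      q21 X = (2 ^ a)%N%:Z * ga, q22 X - 1 = (2 ^ a)%N%:Z * ep &
      [/\ al * ep - be * ga = (2 ^ j)%N%:Z * o & o = 2 * t + 1]].

Definition WQ (X : Q) (a k : nat) : Prop :=
  exists j : nat, WQj X a j /\ (a + j <= k)%N.

Lemma pow2_dvd (l c : nat) : (l <= c)%N -> ((2 ^ l)%N%:Z %| (2 ^ c)%N%:Z)%Z.
Proof. by move=> h; rewrite dvdzE /=; apply: dvdn_exp2l. Qed.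

Lemma klem_aux (a j E l : nat) (o t z w : int) :
  o = 2 * t + 1 -> (a + j + l <= E)%N ->
  ((2 ^ E)%N%:Z %| w)%Z -> w = (2 ^ a)%N%:Z * ((2 ^ j)%N%:Z * o) * z ->
  ((2 ^ l)%N%:Z %| z)%Z.
Proof.
move=> ho hE hw hwz.
have hc : E = ((a + j) + (E - (a + j)))%N by lia.
move: hw; rewrite hwz hc expnD PoszM expnD PoszM -!mulrA dvdz_mul2l; last first.
  by rewrite eqz_nat expn_eq0.
rewrite dvdz_mul2l; last by rewrite eqz_nat expn_eq0.
move/(@odd_dvd _ _ _ _ ho) => h; apply: dvdz_trans h; apply: pow2_dvd; lia.
Qed.

Lemma klem (X : Q) (a k E l : nat) (x y : int) : WQ X a k -> (k + l <= E)%N ->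
  ((2 ^ E)%N%:Z %| (q11 X - 1) * x + q12 X * y)%Z ->
  ((2 ^ E)%N%:Z %| q21 X * x + (q22 X - 1) * y)%Z ->
  ((2 ^ l)%N%:Z %| x)%Z /\ ((2 ^ l)%N%:Z %| y)%Z.
Proof.
case=> [j [[al [be [ga [ep [o [t [h11 h12 h21 h22 [hD ho]]]]]]]] hk]] hE d1 d2.
rewrite h11 h12 in d1; rewrite h21 h22 in d2.
split.
- apply: (@klem_aux a j E l o t x _ ho (_ : (a + j + l <= E)%N)
     (_ : ((2 ^ E)%N%:Z %| ep * ((2 ^ a)%N%:Z * al * x + (2 ^ a)%N%:Z * be * y)
                   - be * ((2 ^ a)%N%:Z * ga * x + (2 ^ a)%N%:Z * ep * y))%Z)).
  + lia.
  + by apply: rpredB; apply: dvdz_mull.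
  + rewrite -hD; ring.
- apply: (@klem_aux a j E l o t y _ ho (_ : (a + j + l <= E)%N)
     (_ : ((2 ^ E)%N%:Z %| al * ((2 ^ a)%N%:Z * ga * x + (2 ^ a)%N%:Z * ep * y)
                   - ga * ((2 ^ a)%N%:Z * al * x + (2 ^ a)%N%:Z * be * y))%Z)).
  + lia.
  + by apply: rpredB; apply: dvdz_mull.
  + rewrite -hD; ring.
Qed.



Definition mulQ (X Y : Q) : Q :=
  mkQ (q11 X * q11 Y + q12 X * q21 Y) (q11 X * q12 Y + q12 X * q22 Y)
      (q21 X * q11 Y + q22 X * q21 Y) (q21 X * q12 Y + q22 X * q22 Y).

Definition mxQ (X : Q) : 'M[int]_2 :=
  \matrix_(i < 2, j < 2)
    if val i == 0%N then (if val j == 0%N then q11 X else q12 X)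
    else (if val j == 0%N then q21 X else q22 X).

Definition CQ (p q : nat) : Q := mkQ 1 p%:Z q%:Z (1 + (p * q)%N%:Z).
Definition IQ : Q := mkQ 1 0 0 1.

Fixpoint powQ (p q n : nat) : Q :=
  if n is n'.+1 then mulQ (powQ p q n') (CQ p q) else IQ.

Lemma mxQ_mul X Y : mxQ X * mxQ Y = mxQ (mulQ X Y).
Proof.
apply/matrixP => i j; rewrite [LHS]mxE big_ord_recl big_ord1 !mxE.
by case: (ord2_cases i) => ->; case: (ord2_cases j) => ->.
Qed.

Lemma mxQ_inj : injective mxQ.
Proof.
move=> [a b c d] [a' b' c' d'] h.
move/matrixP: h => h.
have := h 0 0; have := h 0 1; have := h 1 0; have := h 1 1.
by rewrite !mxE /= => -> -> -> ->.
Qed.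

Lemma Cmat_pow p q n : Cmat p q ^+ n = mxQ (powQ p q n).
Proof.
elim: n => [|n IH].
  rewrite expr0; apply/matrixP => i j; rewrite !mxE.
  by case: (ord2_cases i) => ->; case: (ord2_cases j) => ->.
rewrite exprSr IH /= -mxQ_mul; congr (_ * _).
Qed.

Lemma powQD p q m n : powQ p q (m + n) = mulQ (powQ p q m) (powQ p q n).
Proof. by apply: mxQ_inj; rewrite -mxQ_mul -!Cmat_pow exprD. Qed.

Definition detQ (X : Q) := q11 X * q22 X - q12 X * q21 X.

Lemma det_powQ p q n : detQ (powQ p q n) = 1.
Proof.
elim: n => [|n IH] //=.
transitivity (detQ (powQ p q n) * detQ (CQ p q)).
  rewrite /detQ /=; ring.
by rewrite IH /detQ /= PoszM; ring.
Qed.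

Lemma GseqSS A n : Gseq A n.+2 = A * Gseq A n.+1 - Gseq A n.
Proof. by []. Qed.

Lemma tr_powQ p q n : q11 (powQ p q n) + q22 (powQ p q n) = Gn p q n.
Proof.
rewrite /Gn.
suff : (q11 (powQ p q n) + q22 (powQ p q n) = Gseq (Aval p q) n) /\
       (q11 (powQ p q n.+1) + q22 (powQ p q n.+1) = Gseq (Aval p q) n.+1) by case.
elim: n => [|n [IH1 IH2]].
  by split; rewrite /= /Aval ?PoszM //; ring.
split => //.
rewrite GseqSS -IH1 -IH2 /Aval /= PoszM; ring.
Qed.


Lemma WQj_double X a j : detQ X = 1 -> WQj X a j -> (1 <= a)%N -> (2 <= a + j)%N ->
  WQj (mulQ X X) a.+1 j.
Proof.
case: a => // a' hdet [al [be [ga [ep [o [t [h11 h12 h21 h22 [hD ho]]]]]]]] _ hj.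
set P := (2 ^ a')%N%:Z in h11 h12 h21 h22 *.
set Pj := (2 ^ j)%N%:Z in hD *.
have hPa : (2 ^ a'.+1)%N%:Z = 2 * P by rewrite expnS PoszM.
have hPa2 : (2 ^ a'.+2)%N%:Z = 4 * P by rewrite !expnS !PoszM /P; ring.
rewrite hPa in h11 h12 h21 h22.
have e11 : q11 X = 2 * P * al + 1 by rewrite -h11; ring.
have e22 : q22 X = 2 * P * ep + 1 by rewrite -h22; ring.
(* trace relation from det = 1 *)
have htr : al + ep = - (2 * P * (Pj * o)).
  have hP0 : 2 * P != 0 by rewrite /P mulf_neq0 // eqz_nat expn_eq0.
  apply: (mulfI hP0).
  have : detQ X - 1 = 0 by rewrite hdet subrr.
  rewrite /detQ e11 e22 h12 h21 -hD => h.
  by apply/eqP; rewrite -subr_eq0 -h; apply/eqP; ring.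
pose m := (2 * a' + j).-1.
have hm : P * P * Pj = 2 * (2 ^ m)%N%:Z.
  rewrite /P /Pj -!PoszM -!expnD -expnS; congr (Posz (2 ^ _)); lia.
exists (al + P * (al * al + be * ga)), (be + P * (al * be + be * ep)),
       (ga + P * (ga * al + ep * ga)), (ep + P * (ga * be + ep * ep)),
       (o * (1 - P * P * Pj * o)), (t - (2 ^ m)%N%:Z * o * o).
split; rewrite /mulQ /= ?hPa2 ?e11 ?e22 ?h12 ?h21.
- ring.
- ring.
- ring.
- ring.
- split.
  + transitivity ((al * ep - be * ga) * (1 + P * (al + ep) + P * P * (al * ep - be * ga))).
      ring.
    rewrite htr hD; ring.
  + rewrite hm ho; ring.
Qed.


Lemma nat_odd_dec (n : nat) : exists u : int, n%:Z = 2 * u + (odd n)%:Z.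
Proof.
exists (n./2)%:Z; rewrite -{1}(odd_double_half n) -muln2 PoszD PoszM; ring.
Qed.

Lemma base_even p q : exists al be ga ep : int,
  [/\ q11 (powQ p q (T1 p q)) - 1 = 2 * al, q12 (powQ p q (T1 p q)) = 2 * be,
      q21 (powQ p q (T1 p q)) = 2 * ga & q22 (powQ p q (T1 p q)) - 1 = 2 * ep].
Proof.
have [u hu] := nat_odd_dec p; have [w hw] := nat_odd_dec q.
rewrite /T1; case hp: (odd p) hu; case hq: (odd q) hw => /= hw hu;
  rewrite /CQ /= ?PoszM hu hw.
- exists ((2) + (5)*w + (2)*w*w + (5)*u + (14)*u*w + (8)*u*w*w + (2)*u*u + (8)*u*u*w + (8)*u*u*w*w), ((4) + (6)*w + (2)*w*w + (14)*u + (28)*u*w + (12)*u*w*w + (14)*u*u + (40)*u*u*w + (24)*u*u*w*w + (4)*u*u*u + (16)*u*u*u*w + (16)*u*u*u*w*w), ((4) + (14)*w + (14)*w*w + (4)*w*w*w + (6)*u + (28)*u*w + (40)*u*w*w + (16)*u*w*w*w + (2)*u*u + (12)*u*u*w + (24)*u*u*w*w + (16)*u*u*w*w*w), ((6) + (19)*w + (16)*w*w + (4)*w*w*w + (19)*u + (70)*u*w + (76)*u*w*w + (24)*u*w*w*w + (16)*u*u + (76)*u*u*w + (112)*u*u*w*w + (48)*u*u*w*w*w + (4)*u*u*u + (24)*u*u*u*w + (48)*u*u*u*w*w + (32)*u*u*u*w*w*w).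
  by split; ring.
- exists ((1)*w + (2)*u*w), ((1) + (1)*w + (2)*u + (4)*u*w + (4)*u*u*w), ((2)*w + (2)*w*w + (4)*u*w*w), ((3)*w + (2)*w*w + (6)*u*w + (8)*u*w*w + (8)*u*u*w*w).
  by split; ring.
- exists ((1)*u + (2)*u*w), ((2)*u + (2)*u*u + (4)*u*u*w), ((1) + (2)*w + (1)*u + (4)*u*w + (4)*u*w*w), ((3)*u + (6)*u*w + (2)*u*u + (8)*u*u*w + (8)*u*u*w*w).
  by split; ring.
- exists 0, u, w, (2 * u * w).
  by split; ring.
Qed.

Lemma v2_dec (z : int) : z != 0 ->
  exists o t : int, o = 2 * t + 1 /\ z = (2 ^ v2 z)%N%:Z * o.
Proof.
move=> hz.
have hn : (0 < `|z|)%N by rewrite absz_gt0.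
have [m hm hmz] := pfactor_coprime (isT : prime 2) hn.
rewrite coprime2n in hm.
have hm' : m%:Z = 2 * (m./2)%:Z + 1.
  rewrite -{1}(odd_double_half m) hm -muln2 PoszD PoszM /=; ring.
rewrite /v2; set k := logn 2 `|z|%N in hmz *; clearbody k.
case: z hz hn hmz => n hz hn /= hmz.
- exists m%:Z, (m./2)%:Z; split => //.
  by rewrite hmz PoszM mulrC.
- exists (- m%:Z), (- (m./2)%:Z - 1); split; first by rewrite hm'; ring.
  by rewrite NegzE hmz PoszM; ring.
Qed.


Lemma WQj_iter p q n a j i : WQj (powQ p q n) a j -> (1 <= a)%N -> (2 <= a + j)%N ->
  WQj (powQ p q (2 ^ i * n)) (a + i) j.
Proof.
move=> h ha haj; elim: i => [|i IH]; first by rewrite expn0 mul1n addn0.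
rewrite expnS -mulnA mul2n -addnn powQD addnS.
apply: WQj_double => //; [exact: det_powQ | lia | lia].
Qed.

Lemma Gseq_grow (A : int) : 3 <= A -> forall n,
  2 <= Gseq A n /\ Gseq A n + 1 <= Gseq A n.+1.
Proof.
move=> hA; elim=> [|n [h1 h2]]; first by split => //=; lia.
split; first by lia.
rewrite GseqSS.
have : 3 * Gseq A n.+1 <= A * Gseq A n.+1 by apply: ler_wpM2r; lia.
lia.
Qed.

Lemma Gn_gt2 p q n : (0 < p)%N -> (0 < q)%N -> (0 < n)%N -> 2 < Gn p q n.
Proof.
move=> hp hq; case: n => // n _.
have hA : 3 <= Aval p q.
  rewrite /Aval; have : (1 <= p * q)%N by rewrite muln_gt0 hp hq.
  lia.
have [h1 h2] := Gseq_grow (Aval p q) hA n; rewrite /Gn; lia.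
Qed.

Lemma pow_split (a b : nat) : (a <= b)%N ->
  (2 ^ b)%N%:Z = (2 ^ a)%N%:Z * (2 ^ (b - a))%N%:Z.
Proof. by move=> h; rewrite -PoszM -expnD subnKC. Qed.

Lemma nat_pfactor2 (n : nat) : (0 < n)%N ->
  exists m : nat, exists t : int, m%:Z = 2 * t + 1 /\ n = (m * 2 ^ logn 2 n)%N.
Proof.
move=> hn; have [m hm hmz] := pfactor_coprime (isT : prime 2) hn.
rewrite coprime2n in hm.
exists m, (m./2)%:Z; split => //.
rewrite -{1}(odd_double_half m) hm -muln2 PoszD PoszM /=; ring.
Qed.

Lemma WQ_one p q : (0 < p)%N -> (0 < q)%N ->
  WQ (powQ p q 1) (minn (ep p) (ep q)) (maxn (ep p) (ep q)).
Proof.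
move=> hp hq.
have [p' [t1 [hp' hpe]]] := nat_pfactor2 _ hp.
have [q' [t2 [hq' hqe]]] := nat_pfactor2 _ hq.
rewrite /ep; set e1 := logn 2 p in hpe *; set e2 := logn 2 q in hqe *.
clearbody e1 e2.
set a := minn e1 e2.
have ha1 : (a <= e1)%N by rewrite /a geq_minl.
have ha2 : (a <= e2)%N by rewrite /a geq_minr.
exists (e1 + e2 - 2 * a)%N; split; last by rewrite /a; lia.
exists 0, (p'%:Z * (2 ^ (e1 - a))%N%:Z), (q'%:Z * (2 ^ (e2 - a))%N%:Z),
  (p'%:Z * q'%:Z * (2 ^ (e1 - a))%N%:Z * (2 ^ e2)%N%:Z),
  (- (p'%:Z * q'%:Z)), (- (2 * t1 * t2 + t1 + t2) - 1).
have E1 := pow_split _ _ ha1; have E2 := pow_split _ _ ha2.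
have E3 : (2 ^ (e1 - a))%N%:Z * (2 ^ (e2 - a))%N%:Z = (2 ^ (e1 + e2 - 2 * a))%N%:Z.
  by rewrite -PoszM -expnD; congr (Posz (2 ^ _)); lia.
split; rewrite /= ?hpe ?hqe ?PoszM ?E1 ?E2.
- ring.
- ring.
- ring.
- ring.
- split.
  + rewrite -E3; ring.
  + rewrite hp' hq'; ring.
Qed.


Lemma tr_struct X (c al be ga ep : int) :
  q11 X - 1 = c * al -> q12 X = c * be -> q21 X = c * ga -> q22 X - 1 = c * ep ->
  detQ X = 1 -> q11 X + q22 X = 2 - c * c * (al * ep - be * ga).
Proof.
move=> h11 h12 h21 h22 hd.
have e11 : q11 X = c * al + 1 by rewrite -h11; ring.
have e22 : q22 X = c * ep + 1 by rewrite -h22; ring.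
move: hd; rewrite /detQ e11 e22 h12 h21 => hd.
transitivity (2 - c * c * (al * ep - be * ga) + ((c * al + 1) * (c * ep + 1) - c * be * (c * ga) - 1)).
  ring.
by rewrite hd subrr addr0.
Qed.

Lemma int_parity (z : int) : (exists t, z = 2 * t) \/ (exists t, z = 2 * t + 1).
Proof.
case: z => n.
- have [u hu] := nat_odd_dec n; case: (odd n) hu => /= hu.
  + by right; exists u.
  + by left; exists u; rewrite hu addr0.
- have [u hu] := nat_odd_dec n.+1; rewrite NegzE hu.
  case: (odd n.+1) => /=.
  + by right; exists (- u - 1); ring.
  + by left; exists (- u); ring.
Qed.

Lemma pow2_le (a b : nat) (o t : int) : o = 2 * t + 1 ->
  (((2 ^ a)%N%:Z) %| (2 ^ b)%N%:Z * o)%Z -> (a <= b)%N.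
Proof.
move=> ho; rewrite mulrC => /(@odd_dvd _ _ _ _ ho).
by rewrite dvdzE /= dvdn_Pexp2l.
Qed.

Lemma half_G (D : int) : ((2 - 4 * D) %/ 2)%Z = 1 - 2 * D.
Proof.
by rewrite (_ : 2 - 4 * D = (1 - 2 * D) * 2); [rewrite mulzK | ring].
Qed.

Lemma mod4_even (t : int) : (((1 - 2 * (2 * t)) %% 4)%Z == 1) = true.
Proof.
by rewrite (_ : 1 - 2 * (2 * t) = (- t) * 4 + 1); [rewrite modzMDl | ring].
Qed.

Lemma mod4_odd (t : int) : (((1 - 2 * (2 * t + 1)) %% 4)%Z == 1) = false.
Proof.
by rewrite (_ : 1 - 2 * (2 * t + 1) = (- t - 1) * 4 + 3); [rewrite modzMDl | ring].
Qed.

Arguments tr_struct {X c al be ga ep}.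
Arguments WQj_iter {p q n a j} i.
Arguments WQ_one {p q}.
Arguments Gn_gt2 {p q n}.
Arguments v2_dec {z}.
Arguments pow2_le {a b o t}.

Lemma base_struct p q : exists al be ga ep : int,
  [/\ q11 (powQ p q (T1 p q)) - 1 = 2 * al, q12 (powQ p q (T1 p q)) = 2 * be,
      q21 (powQ p q (T1 p q)) = 2 * ga, q22 (powQ p q (T1 p q)) - 1 = 2 * ep &
      Gn p q (T1 p q) = 2 - 4 * (al * ep - be * ga)].
Proof.
have [al [be [ga [ep [h11 h12 h21 h22]]]]] := base_even p q.
exists al, be, ga, ep; split => //.
rewrite -tr_powQ (tr_struct h11 h12 h21 h22 (det_powQ _ _ _)); ring.
Qed.

Lemma T1_pos p q : (0 < T1 p q)%N.
Proof. by rewrite /T1; case: ifP => _ //; case: ifP. Qed.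

Lemma WQ_le X a k k' : WQ X a k -> (k <= k')%N -> WQ X a k'.
Proof. by case=> j [h hk] hk'; exists j; split => //; lia. Qed.

Lemma two_pow1 : (2 ^ 1)%N%:Z = 2 :> int. Proof. by []. Qed.

Lemma WQ_Tc p q Tc lc s e : (0 < p)%N -> (0 < q)%N ->
  (Tc = (2 ^ lc * T1 p q)%N \/ Tc = 1%N) ->
  ((if Tc == 1%N then maxn (ep p) (ep q)
    else if lc == 0%N then esg p q + 1
    else if lc <= s + 1 then esg p q + 2 * lc - 1
    else esg p q + s + 1 + lc) <= e)%N ->
  exists a, WQ (powQ p q Tc) a e.
Proof.
move=> hp hq hTcf hbound.
case: (eqVneq Tc 1%N) => [hT | hT].
  rewrite hT eqxx in hbound; rewrite hT.
  by exists (minn (ep p) (ep q)); apply: WQ_le (WQ_one hp hq) hbound.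
rewrite (negbTE hT) in hbound.
have hTc : Tc = (2 ^ lc * T1 p q)%N by case: hTcf => // h; rewrite h eqxx in hT.
have hb : (esg p q + lc + (lc == 0%N) <= e)%N.
  move: hbound; case: eqP => [->|hl0]; [|case: ifP => _]; rewrite /=; lia.
have [al [be [ga [ep [h11 h12 h21 h22 hG]]]]] := base_struct p q.
set D := al * ep - be * ga in hG.
have hGgt := Gn_gt2 hp hq (T1_pos p q).
case: (int_parity D) => [[t hD] | [t hD]].
-
  have hm0 : m0 p q = 0%N by rewrite /m0 hG half_G hD mod4_even.
  have hz : 1 - 2 * (2 * t) - 1 = - (4 * t) by ring.
  have hesg : esg p q = v2 (- (4 * t)) by rewrite /esg hm0 expn0 mul1n hG half_G hD hz.
  have hz0 : - (4 * t) != 0.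
    apply/eqP => h0; move: hGgt; rewrite hG hD.
    have -> : 4 * (2 * t) = - (2 * (- (4 * t))) by ring.
    by rewrite h0 mulr0 oppr0 subr0 ltxx.
  have [o [t' [ho hzo]]] := v2_dec hz0; rewrite -hesg in hzo.
  have hes2 : (2 <= esg p q)%N.
    apply: (pow2_le ho); rewrite -hzo; apply/dvdzP; exists (- t); ring.
  have hDo : D = (2 ^ (esg p q - 1))%N%:Z * (- o).
    apply: (mulfI (_ : (2 : int) != 0)) => //.
    have : (2 ^ esg p q)%N%:Z = 2 * (2 ^ (esg p q - 1))%N%:Z.
      by rewrite -PoszM -expnS; congr (Posz (2 ^ _)); lia.
    move=> h2; transitivity (- (- (4 * t))); first by rewrite hD; ring.
    by rewrite hzo h2; ring.
  have W0 : WQj (powQ p q (T1 p q)) 1 (esg p q - 1).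
    exists al, be, ga, ep, (- o), (- t' - 1); rewrite two_pow1; split => //.
    split; first by rewrite -/D hDo.
    by rewrite ho; ring.
  have W1 := WQj_iter lc W0 (leqnn 1) (_ : (2 <= 1 + (esg p q - 1))%N).
  exists (1 + lc)%N; exists (esg p q - 1)%N; split; first by rewrite hTc; apply: W1; lia.
  lia.
-
  have hm0 : m0 p q = 1%N by rewrite /m0 hG half_G hD mod4_odd.
  case: (posnP lc) => [lc0 | lcpos].
    exists 1%N, 0%N; split; last by move: hb; rewrite lc0; lia.
    rewrite hTc lc0 expn0 mul1n.
    exists al, be, ga, ep, D, t; rewrite two_pow1; split => //.
    by split; rewrite // expn0 mul1r.
  set X := powQ p q (T1 p q) in h11 h12 h21 h22.
  have hY : powQ p q (2 ^ 1 * T1 p q) = mulQ X X by rewrite expn1 mul2n -addnn powQD.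
  have e11 : q11 X = 2 * al + 1 by rewrite -h11; ring.
  have e22 : q22 X = 2 * ep + 1 by rewrite -h22; ring.
  set a2 := al + al * al + be * ga.
  set b2 := be + al * be + be * ep.
  set g2 := ga + ga * al + ep * ga.
  set d2 := ep + ga * be + ep * ep.
  have y11 : q11 (powQ p q (2 ^ 1 * T1 p q)) - 1 = 4 * a2.
    by rewrite hY /= e11 h12 h21 /a2; ring.
  have y12 : q12 (powQ p q (2 ^ 1 * T1 p q)) = 4 * b2.
    by rewrite hY /= e11 e22 h12 /b2; ring.
  have y21 : q21 (powQ p q (2 ^ 1 * T1 p q)) = 4 * g2.
    by rewrite hY /= e11 e22 h21 /g2; ring.
  have y22 : q22 (powQ p q (2 ^ 1 * T1 p q)) - 1 = 4 * d2.
    by rewrite hY /= e22 h12 h21 /d2; ring.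
  set D2 := a2 * d2 - b2 * g2.
  have hG2 : Gn p q (2 ^ 1 * T1 p q) = 2 - 4 * (4 * D2).
    rewrite -tr_powQ (tr_struct y11 y12 y21 y22 (det_powQ _ _ _)) -/D2; ring.
  have hz : 1 - 2 * (4 * D2) - 1 = - (8 * D2) by ring.
  have hesg : esg p q = v2 (- (8 * D2)) by rewrite /esg hm0 hG2 half_G hz.
  have hpos : (0 < 2 ^ 1 * T1 p q)%N by rewrite muln_gt0 T1_pos.
  have hGgt2 := Gn_gt2 hp hq hpos.
  have hz0 : - (8 * D2) != 0.
    apply/eqP => h0; move: hGgt2; rewrite hG2.
    have -> : 4 * (4 * D2) = - (2 * (- (8 * D2))) by ring.
    by rewrite h0 mulr0 oppr0 subr0 ltxx.
  have [o [t' [ho hzo]]] := v2_dec hz0; rewrite -hesg in hzo.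
  have hes3 : (3 <= esg p q)%N.
    apply: (pow2_le ho); rewrite -hzo; apply/dvdzP; exists (- D2); ring.
  have hDo : D2 = (2 ^ (esg p q - 3))%N%:Z * (- o).
    apply: (mulfI (_ : (8 : int) != 0)) => //.
    have h2 : (2 ^ esg p q)%N%:Z = 8 * (2 ^ (esg p q - 3))%N%:Z.
      by rewrite (pow_split 3 (esg p q)).
    transitivity (- (- (8 * D2))); first by ring.
    by rewrite hzo h2; ring.
  have W0 : WQj (powQ p q (2 ^ 1 * T1 p q)) 2 (esg p q - 3).
    exists a2, b2, g2, d2, (- o), (- t' - 1); split => //.
    split; first by rewrite -/D2 hDo.
    by rewrite ho; ring.
  have W1 := WQj_iter lc.-1 W0 (_ : (1 <= 2)%N) (_ : (2 <= 2 + (esg p q - 3))%N).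
  exists (2 + lc.-1)%N; exists (esg p q - 3)%N; split.
    rewrite hTc (_ : (2 ^ lc * T1 p q = 2 ^ lc.-1 * (2 ^ 1 * T1 p q))%N); first by apply: W1; lia.
    by rewrite mulnA -expnD addn1 prednK.
  move: hb; rewrite (_ : (lc == 0%N) = false); last by rewrite eqn0Ngt lcpos.
  lia.
Qed.

Lemma surj_phi p q Tc e l a : (0 < e)%N -> WQ (powQ p q Tc) a e ->
  forall u : 'cV['Z_(2 ^ (e + l))]_2, pt_period p q (e + l) u Tc ->
  exists v, u = phi l v.
Proof.
move=> he W u /and3P [_ hfix _].
set X := powQ p q Tc in W.
have hE : (1 < 2 ^ (e + l))%N by apply: gt1_2exp; lia.
have hM : Cmod p q (e + l) ^+ Tc = map_mx (fun z : int => z%:~R) (mxQ X)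
  by rewrite Cmod_pow Cmat_pow.
set x := liftz (u 0 0); set y := liftz (u 1 0).
have hu0 : u 0 0 = x%:~R by rewrite liftzK.
have hu1 : u 1 0 = y%:~R by rewrite liftzK.
move/eqP/matrixP: hfix => hfix.
have d1 : ((2 ^ (e + l))%N%:Z %| (q11 X - 1) * x + q12 X * y)%Z.
  have := hfix 0 0; rewrite mulmx2E hM !mxE /= hu0 hu1 -!intrM -intrD.
  move/eqP; rewrite intrZp_eq // => h.
  by rewrite (_ : (q11 X - 1) * x + q12 X * y = q11 X * x + q12 X * y - x) //; ring.
have d2 : ((2 ^ (e + l))%N%:Z %| q21 X * x + (q22 X - 1) * y)%Z.
  have := hfix 1 0; rewrite mulmx2E hM !mxE /= hu0 hu1 -!intrM -intrD.
  move/eqP; rewrite intrZp_eq // => h.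
  by rewrite (_ : q21 X * x + (q22 X - 1) * y = q21 X * x + q22 X * y - y) //; ring.
have [hx hy] := @klem X a e (e + l) l x y W (leqnn (e + l)) d1 d2.
case/dvdzP: hx => x' hx'; case/dvdzP: hy => y' hy'.
exists (\col_(i < 2) ((if val i == 0%N then x' else y')%:~R)).
apply: col2P; rewrite !mxE /=.
- by rewrite -(@up_eq e l he x' _ (erefl _)) hu0 hx' mulrC.
- by rewrite -(@up_eq e l he y' _ (erefl _)) hu1 hy' mulrC.
Qed.

End Helpers.

Theorem theorem4 (p q : nat) (hp : (0 < p)%N) (hq : (0 < q)%N)
    (Tc lc s : nat) (hTc : (0 < Tc)%N)
    (hTcform : Tc = (2 ^ lc * T1 p q)%N \/ Tc = 1%N)
    (hs : mx_least_period p q `|es p q|%N (2 ^ s * T1 p q))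
    (e : nat) (he : (0 < e)%N)
    (hbound : ((if Tc == 1%N then maxn (ep p) (ep q)
                else if lc == 0%N then esg p q + 1
                else if lc <= s + 1 then esg p q + 2 * lc - 1
                else esg p q + s + 1 + lc) <= e)%N) :
  forall l : nat, (0 < l)%N -> Ncycles p q Tc e = Ncycles p q Tc (e + l).
Proof.
move=> l _.
have [a W] := @WQ_Tc p q Tc lc s e hp hq hTcform hbound.
exact: (@Ncycles_stable p q Tc e l he (@surj_phi p q Tc e l a he W)).
Qed.
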